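(* For $h\in\mathbb N$ and $0\le m<h$ let $c(m;h)=\frac{\#\{0\le x<h: x^2\equiv m\bmod h\}}{h}$. Then the sequence of squares $(\ell^2)_{\ell\ge1}$ distributes regularly within residue classes, i.e. $\lim_{L\to\infty}\frac1L\#\{\ell\le L:\ell^2\equiv m\bmod h\}=c(m;h)$ for all $h,m$ and $c(m;h_1h_2)=c(m;h_1)c(m;h_2)$ for coprime $h_1,h_2$. Moreover, for every $k\ge2$ and every $k$-DFA $(Q,\{0,\dots,k-1\},\delta,q_0)$ admitting a synchronizing word, $$\lim_{\lambda\to\infty}\sum_{0\le m<k^\lambda,\ m\notin S_\lambda}c(m;k^\lambda)=0.$$
   Context: A word $w$ over $\{0,\dots,k-1\}$ is synchronizing for the DFA if $\delta(q,w)=\delta(q',w)$ for all states $q,q'$ ($\delta$ extended to words letter by letter). $S$ is the set of $n\ge0$ whose base-$k$ expansion $(n)_k$ (most significant digit first, $(0)_k$ empty) is synchronizing, and $S_\lambda=S\cap[0,k^\lambda-1]$. *)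

(* Defs.v *)
From Stdlib Require Import Reals.
From mathcomp Require Import all_boot.
Set Implicit Arguments. Unset Strict Implicit. Unset Printing Implicit Defensive.

Definition csq (m h : nat) : R :=
  Rdiv (INR (count (fun x => x ^ 2 == m %[mod h]) (iota 0 h))) (INR h).

Definition count_sq (m h L : nat) : nat :=
  count (fun l => l ^ 2 == m %[mod h]) (iota 1 L).

(* base-k digits, most significant first; (0)_k is empty.  Fuel n suffices for k >= 2. *)
Fixpoint digits_aux (k fuel n : nat) : seq nat :=
  match fuel with
  | 0 => [::]
  | f.+1 => if n == 0 then [::] else rcons (digits_aux k f (n %/ k)) (n %% k)
  end.
Definition digits (k n : nat) : seq nat := digits_aux k n n.

(* the base-k expansion as a word over {0,...,k-1} (all digits are < k when k >= 1) *)
Definition word_of (k n : nat) : seq 'I_k := pmap insub (digits k n).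

Definition delta_star (Q : finType) (k : nat) (delta : Q -> 'I_k -> Q)
  (q : Q) (w : seq 'I_k) : Q := foldl delta q w.

Definition synchronizing (Q : finType) (k : nat) (delta : Q -> 'I_k -> Q)
  (w : seq 'I_k) : bool :=
  [forall q, forall q', delta_star delta q w == delta_star delta q' w].

Definition inS (Q : finType) (k : nat) (delta : Q -> 'I_k -> Q) (n : nat) : bool :=
  synchronizing delta (word_of k n).

Definition inS_lambda (Q : finType) (k : nat) (delta : Q -> 'I_k -> Q) (lam n : nat) : bool :=
  inS delta n && (n < k ^ lam).

(* Main.v *)
Require Import Defs.
From Stdlib Require Import Reals Lra Lia ZArith.
From mathcomp Require Import all_boot zify.
Set Implicit Arguments. Unset Strict Implicit. Unset Printing Implicit Defensive.

Section Dig.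
Variable k : nat.
Hypothesis k2 : 1 < k.

Lemma k0 : 0 < k. Proof. by apply: ltn_trans k2. Qed.

Lemma digits_aux_fuel f1 f2 n : n <= f1 -> n <= f2 ->
  digits_aux k f1 n = digits_aux k f2 n.
Proof.
elim: f1 f2 n => [|f1 IH] [|f2] n /= h1 h2.
- by [].
- by move: h1; rewrite leqn0 => /eqP ->.
- by move: h2; rewrite leqn0 => /eqP ->.
case: eqP => // /eqP nz; congr rcons; apply: IH.
  have : n %/ k < n by rewrite ltn_Pdiv // lt0n.
  lia.
have : n %/ k < n by rewrite ltn_Pdiv // lt0n.
lia.
Qed.

Lemma digitsE n : digits k n =
  if n == 0 then [::] else rcons (digits k (n %/ k)) (n %% k).
Proof.
rewrite /digits; case: n => [//|n] /=.
congr rcons; apply: digits_aux_fuel => //.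
have : n.+1 %/ k < n.+1 by rewrite ltn_Pdiv.
lia.
Qed.

Fixpoint pad m b := match m with 0 => [::] | m'.+1 => rcons (pad m' (b %/ k)) (b %% k) end.

Lemma digits_split m a b : 0 < a -> b < k ^ m ->
  digits k (a * k ^ m + b) = digits k a ++ pad m b.
Proof.
elim: m b => [|m IH] b a0 hb /=.
  by move: hb; rewrite expn0 ltnS leqn0 => /eqP ->; rewrite muln1 addn0 cats0.
rewrite digitsE.
have -> : (a * k ^ m.+1 + b == 0) = false.
  apply/negbTE; rewrite -lt0n; apply: (leq_trans _ (leq_addr _ _)).
  by rewrite muln_gt0 a0 expn_gt0 k0.
rewrite expnSr mulnA {1}(divn_eq b k) addnA -mulnDl.
rewrite divnMDl ?k0 // modnMDl (divn_small (ltn_pmod _ k0)) addn0.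
rewrite IH // -?rcons_cat //.
by rewrite ltn_divLR ?k0 // -expnSr.
Qed.

Definition valw (s : seq nat) : nat := foldl (fun acc d => acc * k + d) 0 s.

Lemma valw_rcons s d : valw (rcons s d) = valw s * k + d.
Proof. by rewrite /valw foldl_rcons. Qed.

Lemma valw_pad s : all (fun d => d < k) s ->
  valw s < k ^ size s /\ pad (size s) (valw s) = s.
Proof.
elim/last_ind: s => [|s d IH]; first by rewrite /= expn0.
rewrite all_rcons => /andP [hd /IH [h1 h2]].
rewrite valw_rcons size_rcons /= divnMDl ?k0 // modnMDl (divn_small hd) addn0
  (modn_small hd) h2; split => //.
rewrite expnSr; apply: (@leq_trans ((valw s).+1 * k)).
  by rewrite mulSn addnC ltn_add2r.
by rewrite leq_mul2r h1 orbT.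
Qed.

Lemma sync_cat (Q : finType) (delta : Q -> 'I_k -> Q) u w v :
  synchronizing delta w -> synchronizing delta (u ++ w ++ v).
Proof.
move=> /forallP hw; apply/forallP => q; apply/forallP => q'.
rewrite /delta_star !foldl_cat.
by move: (hw (foldl delta q u)) => /forallP /(_ (foldl delta q' u)) /eqP; rewrite /delta_star => ->.
Qed.

Lemma word_of_sync (Q : finType) (delta : Q -> 'I_k -> Q) (w : seq 'I_k) Y i :
  synchronizing delta w ->
  Y %/ k ^ i %% k ^ (size w).+1 = k ^ size w + valw (map val w) ->
  synchronizing delta (word_of k Y).
Proof.
move=> hs hY.
have [hv hp] : valw (map val w) < k ^ size (map val w) /\
   pad (size (map val w)) (valw (map val w)) = map val w.
  by apply: valw_pad; apply/allP => d /mapP [x _ ->]; exact: ltn_ord.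
rewrite size_map in hv hp.
set a := Y %/ k ^ i.
have ha : a = (a %/ k ^ (size w).+1 * k + 1) * k ^ size w + valw (map val w).
  by rewrite {1}(divn_eq a (k ^ (size w).+1)) hY expnS mulnA mulnDl mul1n addnA.
have a0 : 0 < a.
  by rewrite ha; apply: (leq_trans _ (leq_addr _ _)); rewrite muln_gt0 addn1 expn_gt0 k0.
rewrite /word_of (divn_eq Y (k ^ i)) -/a digits_split // ?ltn_pmod ?expn_gt0 ?k0 //.
rewrite ha digits_split ?addn1 // hp -catA !pmap_cat (map_pK (@valK _ _ _)).
exact: sync_cat.
Qed.
End Dig.

Lemma count_sumE (T : Type) (a : pred T) s : count a s = \sum_(x <- s) (a x : nat).
Proof. by elim: s => [|y s IH]; rewrite ?big_nil ?big_cons //= IH. Qed.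

Lemma count_blocks (P : pred nat) s a T :
  count P (iota s (a * T)) = \sum_(t < T) count P (iota (s + a * t) a).
Proof.
elim: T => [|T IH]; first by rewrite muln0 big_ord0.
by rewrite big_ord_recr /= -IH mulnS addnC iotaD count_cat.
Qed.

Lemma count_dvd_block d t : 0 < d -> count (fun y => d %| y) (iota (d * t) d) = 1.
Proof.
move=> d0; case: d d0 => [//|d] _.
rewrite -add1n iotaD count_cat /= dvdn_mulr // addn0.
have -> : count (fun y => d.+1 %| y) (iota (d.+1 * t + 1) d) = 0.
  apply/eqP; rewrite -leqn0 leqNgt -has_count; apply/hasPn => y.
  rewrite mem_iota => /andP [h1 h2]; apply/negP => /dvdnP [q hq].
  move: h1 h2; rewrite hq => h1 h2.
  have : t < q by rewrite -(ltn_pmul2l (ltn0Sn d)); rewrite mulnC in h1 |- *; lia.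
  have : q < t.+1 by rewrite -(ltn_pmul2l (ltn0Sn d)); rewrite [q * _]mulnC in h2; lia.
  lia.
by [].
Qed.

Lemma count_dvd d M : 0 < d -> count (fun y => d %| y) (iota 0 (d * M)) = M.
Proof.
move=> d0; rewrite count_blocks.
under eq_bigr => t _ do rewrite count_dvd_block //.
by rewrite sum1_card card_ord.
Qed.

Lemma count_split (P : pred nat) a T :
  count P (iota 0 (a * T)) = \sum_(x <- iota 0 a) count (fun t => P (a * t + x)) (iota 0 T).
Proof.
rewrite count_blocks.
rewrite (eq_bigr (fun t : 'I_T => \sum_(x <- iota 0 a) (P (a * t + x) : nat))); last first.
  by move=> t _; rewrite add0n -[a * t]addn0 iotaDl count_map count_sumE addn0.
rewrite exchange_big /=; apply: eq_bigr => x _.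
by rewrite count_sumE -(big_mkord xpredT (fun t => P (a * t + x) : nat)) /index_iota subn0.
Qed.

Section Win.
Variable k : nat.
Hypothesis k2 : 1 < k.
Variable n V : nat.

Let kp : 0 < k. Proof. exact: k0 k2. Qed.
Let kpe e : 0 < k ^ e. Proof. by rewrite expn_gt0 kp. Qed.

Definition win i Y := Y %/ k ^ i %% k ^ n.

Lemma win_mod i M Y : i + n <= M -> win i (Y %% k ^ M) = win i Y.
Proof.
move=> h; rewrite /win {2}(divn_eq Y (k ^ M)).
have -> : k ^ M = (k ^ (M - i - n) * k ^ n) * k ^ i by rewrite -!expnD; congr (_ ^ _); lia.
by rewrite mulnA divnMDl // mulnA modnMDl.
Qed.

Definition Good lam x := [exists i : 'I_lam.+1, (i + n <= lam) && (win i (x ^ 2) == V)].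

Lemma good_lift lam c x X : Good lam x -> X = x %[mod k ^ lam] -> Good (lam + c) X.
Proof.
move=> /existsP [i /andP [h1 /eqP h2]] hX; apply/existsP.
have hi : i < (lam + c).+1 by rewrite ltnS; apply: leq_trans (leq_addr _ _); rewrite -ltnS.
exists (Ordinal hi) => /=; apply/andP; split; first lia.
rewrite -(win_mod _ h1) -modnXm hX modnXm win_mod //.
by rewrite h2.
Qed.

Lemma good_inS (Q : finType) (delta : Q -> 'I_k -> Q) (w : seq 'I_k) lam x :
  synchronizing delta w -> n = (size w).+1 -> V = k ^ size w + valw k (map val w) ->
  Good lam x -> inS delta (x ^ 2 %% k ^ lam).
Proof.
move=> hs hn hV /existsP [i /andP [h1 /eqP h2]].
rewrite /inS; apply: (word_of_sync k2 (i := i) hs).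
by rewrite -hn -hV -h2 -(win_mod _ h1).
Qed.

End Win.

Lemma gcd_dvd k j c x : 1 < k -> 0 < x ->
  (forall p, p \in primes k -> ~~ (p ^ j %| x)) -> gcdn (2 * x) (k ^ c) %| k ^ j.
Proof.
move=> k2 x0 hx.
have kp : 0 < k by apply: ltn_trans k2.
have g0 : 0 < gcdn (2 * x) (k ^ c) by rewrite gcdn_gt0 muln_gt0 x0.
apply/(dvdn_partP _ g0) => p hp.
have pg : p \in primes (gcdn (2 * x) (k ^ c)) by [].
move: (pg); rewrite mem_primes => /and3P [pp _ pdg].
have pk : p \in primes k.
  rewrite mem_primes pp kp /=.
  have : p %| k ^ c by apply: dvdn_trans pdg (dvdn_gcdr _ _).
  by rewrite Euclid_dvdX // => /andP [].
rewrite p_part pfactor_dvdn // ?expn_gt0 ?kp // lognX.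
have h1 : logn p (gcdn (2 * x) (k ^ c)) <= logn p (2 * x).
  by apply: dvdn_leq_log; [rewrite muln_gt0 x0 | exact: dvdn_gcdl].
have h2 : logn p (2 * x) = (p == 2) + logn p x by rewrite lognM // logn_prime.
have h3 : logn p x < j by move: (hx p pk); rewrite pfactor_dvdn // -ltnNge.
have h4 : 0 < logn p k by rewrite logn_gt0.
have h5 : j <= j * logn p k by rewrite leq_pmulr.
have h6 : (p == 2) <= 1 by case: (p == 2).
lia.
Qed.

Lemma aux_qR q V N : q < N -> q + (V + N - q) = V + N.
Proof. lia. Qed.
Lemma aux_lt r kj V kn : r < kj -> kj * V.+1 <= kj * kn -> r + kj * V < kj * kn.
Proof. rewrite mulnS; lia. Qed.
Lemma aux_D kj R s q r V kn : s = q * kj + r -> kj * (q + R) = kj * (V + kn * (q + 1)) ->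
  kj * R + s = r + kj * V + (q + 1) * (kj * kn).
Proof. nia. Qed.

Section Lift.
Variable k : nat.
Hypothesis k2 : 1 < k.
Variable n V : nat.
Let kp : 0 < k. Proof. exact: k0 k2. Qed.
Let kpe e : 0 < k ^ e. Proof. by rewrite expn_gt0 kp. Qed.

Lemma lift_exists lam j c x : c = j + n -> c <= lam -> 0 < x ->
  gcdn (2 * x) (k ^ c) %| k ^ j -> V < k ^ n ->
  exists2 t, t < k ^ c & win k n (lam + j) ((k ^ lam * t + x) ^ 2) = V.
Proof.
move=> hc hcl x0 hg hV.
set K := k ^ c; set g := gcdn (2 * x) K.
set s := x ^ 2 %/ k ^ lam; set q := s %/ k ^ j.
set R := V + k ^ n * (q + 1) - q; set D := k ^ j * R.
have gD : g %| D by apply: dvdn_trans hg (dvdn_mulr _ _).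
have x2 : 0 < 2 * x by rewrite muln_gt0 x0.
have [a _ ha] := Bezoutl K x2.
set b := (g + a * K) %/ (2 * x).
have hb : 2 * x * b = g + a * K.
  rewrite mulnC /b; exact: (divnK ha).
exists ((b * (D %/ g)) %% K); first exact: ltn_pmod (kpe c).
set t := (b * (D %/ g)) %% K.
have key : (2 * x * t) %% K = D %% K.
  rewrite /t modnMmr mulnA hb mulnDl mulnAC addnC modnMDl.
  by rewrite mulnC divnK.
have hX : (k ^ lam * t + x) ^ 2 = (2 * x * t + t ^ 2 * k ^ lam) * k ^ lam + x ^ 2.
  move: (k ^ lam) => kl; nia.
rewrite hX /win expnD divnMA divnMDl // -/s.
have hj : j + n <= c by rewrite hc.
change (win k n j (2 * x * t + t ^ 2 * k ^ lam + s) = V); rewrite -(@win_mod k k2 n j c) // /win.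
have -> : 2 * x * t + t ^ 2 * k ^ lam + s = (2 * x * t + s) + (t ^ 2 * k ^ (lam - c)) * K.
  by rewrite -(mulnA (t ^ 2)) /K -expnD subnK // [in RHS]addnAC.
rewrite -/K [X in X %% K]addnC modnMDl -modnDml key modnDml.
have hs : s = q * k ^ j + s %% k ^ j by rewrite /q -divn_eq.
have hqR : q + R = V + k ^ n * (q + 1).
  have : q < k ^ n * (q + 1).
    apply: (@leq_trans (q + 1)); first by rewrite addn1.
    by rewrite leq_pmull.
  by move=> h; rewrite /R aux_qR.
have hK : K = k ^ j * k ^ n by rewrite /K hc expnD.
have hlt : s %% k ^ j + k ^ j * V < K.
  have : k ^ j * V.+1 <= k ^ j * k ^ n by rewrite leq_mul2l hV orbT.
  have : s %% k ^ j < k ^ j by rewrite ltn_pmod.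
  by rewrite hK; apply: aux_lt.
have -> : D + s = (s %% k ^ j + k ^ j * V) + (q + 1) * K.
  have : k ^ j * (q + R) = k ^ j * (V + k ^ n * (q + 1)) by rewrite hqR.
  by rewrite /D hK; apply: aux_D.
rewrite addnC modnMDl modn_small // (modn_small hlt) [k ^ j * V]mulnC addnC divnMDl // divn_small ?ltn_pmod // addn0.
by [].
exact: hV.
Qed.
End Lift.

Lemma count_le3 (T : Type) (a b c : pred T) s : (forall x, a x -> b x || c x) ->
  count a s <= count b s + count c s.
Proof.
move=> h; elim: s => [|y s IH] //=.
case ha: (a y); last by rewrite add0n; apply: (leq_trans IH); rewrite addnACA leq_addl.
move: (h y ha); case: (b y); case: (c y) => //= _; rewrite ?add0n ?add1n; lia.
Qed.

Lemma count_has_le (T : Type) (P : seq nat) (F : nat -> pred T) s :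
  count (fun x => has (fun p => F p x) P) s <= \sum_(p <- P) count (F p) s.
Proof.
elim: P => [|p P IH]; first by rewrite big_nil; elim: s.
rewrite big_cons /=; apply: (leq_trans _ (leq_add (leqnn _) IH)).
by apply: count_le3 => x /=.
Qed.

Section Rec.
Variable k : nat.
Hypothesis k2 : 1 < k.
Variable n V : nat.
Let kp : 0 < k. Proof. exact: k0 k2. Qed.
Let kpe e : 0 < k ^ e. Proof. by rewrite expn_gt0 kp. Qed.

Definition bad lam x := ~~ Good k n V lam x.
Definition exc j x := has (fun p => p ^ j %| x) (primes k).
Definition Bd lam := count (bad lam) (iota 0 (k ^ lam)).

Lemma per_x_A lam c x :
  count (fun t => bad (lam + c) (k ^ lam * t + x)) (iota 0 (k ^ c)) <= k ^ c * bad lam x.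
Proof.
rewrite /bad; case hg: (Good k n V lam x) => /=; last first.
  by rewrite muln1 (leq_trans (count_size _ _)) // size_iota.
rewrite muln0 leqn0; apply/eqP/eqP; rewrite -leqn0 leqNgt -has_count; apply/hasPn => t _.
rewrite negbK; apply: (good_lift k2 _ hg).
by rewrite mulnC modnMDl.
Qed.

Lemma per_x_B lam j c x : c = j + n -> c <= lam -> V < k ^ n -> ~~ exc j x -> bad lam x ->
  count (fun t => bad (lam + c) (k ^ lam * t + x)) (iota 0 (k ^ c)) < k ^ c.
Proof.
move=> hc hcl hV hx _.
have x0 : 0 < x.
  rewrite lt0n; apply/negP => /eqP x0; move: hx; rewrite /exc x0.
  apply/negP/negPn/hasP; exists (pdiv k); last exact: dvdn0.
  by rewrite mem_primes pdiv_prime // kp pdiv_dvd.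
have hg : gcdn (2 * x) (k ^ c) %| k ^ j.
  apply: gcd_dvd => // p hp; apply/negP => hpx; move/negP: hx; apply.
  by apply/hasP; exists p.
have [t ht hw] := lift_exists k2 hc hcl x0 hg hV.
have aux a b d : a + b = d -> 0 < b -> a < d by move=> <-; rewrite -{1}[a]addn0 ltn_add2l.
apply: (aux _ (count (predC (fun t => bad (lam + c) (k ^ lam * t + x))) (iota 0 (k ^ c)))).
  by rewrite count_predC size_iota.
rewrite -has_count; apply/hasP; exists t; first by rewrite mem_iota.
rewrite /= /bad negbK; apply/existsP.
have hi : lam + j < (lam + c).+1 by rewrite ltnS hc addnA leq_addr.
exists (Ordinal hi) => /=; rewrite hw eqxx andbT.
by rewrite hc addnA.
Qed.

Lemma rec_A lam c : Bd (lam + c) <= k ^ c * Bd lam.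
Proof.
rewrite /Bd expnD count_split count_sumE big_distrr /=.
by apply: leq_sum => x _; apply: per_x_A.
Qed.

Lemma rec_B lam j c : c = j + n -> c <= lam -> V < k ^ n ->
  Bd (lam + c) + count (fun x => bad lam x && ~~ exc j x) (iota 0 (k ^ lam)) <= k ^ c * Bd lam.
Proof.
move=> hc hcl hV.
rewrite /Bd expnD count_split !count_sumE big_distrr -big_split /=.
apply: leq_sum => x _.
case hb: (bad lam x); case he: (exc j x) => /=; rewrite ?addn0 ?muln1 ?muln0.
- by apply: (leq_trans (per_x_A _ _ _)); rewrite hb muln1.
- by rewrite addn1; apply: (@per_x_B lam j c x hc hcl hV); rewrite ?he ?hb.
- by move: (per_x_A lam c x); rewrite hb muln0.
- by move: (per_x_A lam c x); rewrite hb muln0.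
Qed.

Lemma ex_bound j lam : j <= lam ->
  count (exc j) (iota 0 (k ^ lam)) * 2 ^ j <= size (primes k) * k ^ lam.
Proof.
move=> hj; apply: (leq_trans (leq_mul (count_has_le _ _ _) (leqnn _))).
rewrite big_distrl /= -sum1_size big_distrl /=.
rewrite big_seq [in X in _ <= X]big_seq; apply: leq_sum => p hp.
move: hp; rewrite mem_primes => /and3P [pp _ pk].
have hd : p ^ j %| k ^ lam.
  by apply: dvdn_trans (dvdn_exp2r _ pk) (dvdn_exp2l _ hj).
have pj : 0 < p ^ j by rewrite expn_gt0 prime_gt0.
rewrite -(divnK hd) [_ * p ^ j]mulnC count_dvd // mul1n [p ^ j * _]mulnC leq_mul2l.
apply/orP; right; case: (j) => [|j']; first by rewrite !expn0.
by rewrite leq_exp2r // prime_gt1.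
Qed.
End Rec.

Open Scope R_scope.

Lemma INR_expn m e : INR (m ^ e) = INR m ^ e.
Proof.
elim: e => [|e IH]; first by rewrite expn0.
by rewrite expnS mult_INR IH.
Qed.

Lemma abstract_cv (f : nat -> R) : (forall l, 0 <= f l <= 1) ->
  (forall l d, f (l + d)%N <= f l) ->
  (forall eps, 0 < eps -> exists c e q N, 0 <= e /\ e < eps / 2 /\ 0 <= q < 1 /\
      forall l, (N <= l)%N -> f (l + c)%N - e <= q * (f l - e)) ->
  Un_cv f 0.
Proof.
move=> hb hm hr eps he.
have [c [e [q [N [e0 [e1 [[q0 q1] hl]]]]]]] := hr eps he.
have [M hM] : exists M : nat, forall m, (m >= M)%coq_nat -> Rabs (q ^ m) < eps / 2.
  apply: pow_lt_1_zero; first by rewrite Rabs_right; lra.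
  lra.
have it : forall m, f (N + m * c)%N - e <= q ^ m * (f N - e).
  elim => [|m IH]; first by rewrite mul0n addn0 /=; lra.
  rewrite mulSnr addnA.
  have := hl (N + m * c)%N (leq_addr _ _).
  have hq : 0 <= q by [].
  move=> h; apply: (Rle_trans _ _ _ h) => /=.
  rewrite Rmult_assoc; apply: Rmult_le_compat_l => //.
exists (N + M * c)%N => l hlN.
rewrite /R_dist Rminus_0_r.
have hfl : f l <= f (N + M * c)%N.
  have -> : l = ((N + M * c) + (l - (N + M * c)))%N by apply/esym/subnKC/leP.
  exact: hm.
have := it M; have := hM M (le_n _); have := hb N; have := hb l.
have hqM : 0 <= q ^ M by apply: pow_le.
rewrite Rabs_right; last lra.
move=> hl1 hN hqe hit.
rewrite Rabs_right; last lra.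
have : q ^ M * (f N - e) <= q ^ M by nra.
lra.
Qed.

Close Scope R_scope.

Lemma sum_count_nat K (P : pred nat) : 0 < K ->
  \sum_(m < K | ~~ P m) count (fun x => x ^ 2 == m %[mod K]) (iota 0 K) =
  count (fun x => ~~ P (x ^ 2 %% K)) (iota 0 K).
Proof.
move=> K0.
under eq_bigr => m _ do rewrite count_sumE.
rewrite exchange_big count_sumE /=; apply: eq_bigr => x _.
have hx : x ^ 2 %% K < K by rewrite ltn_pmod.
rewrite big_mkcond /= (bigD1 (Ordinal hx)) //= modn_mod eqxx big1 ?addn0.
  by case: (P _).
move=> m hm; rewrite (modn_small (ltn_ord m)).
case: (P m) => //=; case: eqP => // he; exfalso; move: hm => /eqP; apply; apply: val_inj => /=.
by rewrite he.
Qed.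

Lemma sum_csq K (P : pred nat) : 0 < K ->
  \big[Rplus/R0]_(m < K | ~~ P m) csq m K =
  Rdiv (INR (count (fun x => ~~ P (x ^ 2 %% K)) (iota 0 K))) (INR K).
Proof.
move=> K0; rewrite -sum_count_nat //.
apply: (big_ind2 (fun r (n : nat) => r = Rdiv (INR n) (INR K))).
- by rewrite /= /Rdiv Rmult_0_l.
- by move=> y1 y2 z1 z2 -> ->; rewrite plus_INR /Rdiv Rmult_plus_distr_r.
- by move=> i _; rewrite /csq.
Qed.

Open Scope R_scope.

Lemma div_bounds (a b : nat) : (a <= b)%N -> (0 < b)%N -> 0 <= INR a / INR b <= 1.
Proof.
move=> hab hb.
have hb' : 0 < INR b by apply: lt_0_INR; apply/ltP.
have ha' : INR a <= INR b by apply: le_INR; apply/leP.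
split; first by apply: Rmult_le_pos; [apply: pos_INR | apply: Rlt_le; apply: Rinv_0_lt_compat].
apply: (Rmult_le_reg_r (INR b)) => //.
rewrite /Rdiv Rmult_assoc Rinv_l; lra.
Qed.

Lemma div_mono (b1 b0 K D : R) : 0 < K -> 0 < D -> b1 <= D * b0 -> b1 / (K * D) <= b0 / K.
Proof.
move=> hK hD h.
replace (b0 / K) with ((D * b0) / (K * D)) by (field; lra).
apply: Rmult_le_compat_r => //; apply: Rlt_le; apply: Rinv_0_lt_compat; nra.
Qed.

Lemma rec_real (B1 B0 E C K T P : R) : 0 < K -> 1 <= C -> 0 < T ->
  B1 + B0 <= C * B0 + E -> E * T <= P * K ->
  B1 / (K * C) - P / T <= (1 - / C) * (B0 / K - P / T).
Proof.
move=> hK hC hT h1 h2.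
have hE : E <= P / T * K.
  apply: (Rmult_le_reg_r T) => //.
  replace (P / T * K * T) with (P * K) by (field; lra). lra.
apply: (Rmult_le_reg_r (K * C)); first nra.
replace ((B1 / (K * C) - P / T) * (K * C)) with (B1 - P / T * K * C) by (field; lra).
replace ((1 - / C) * (B0 / K - P / T) * (K * C)) with ((C - 1) * (B0 - P / T * K)) by (field; lra).
nra.
Qed.

Lemma part3 (k : nat) (Q : finType) (delta : Q -> 'I_k -> Q) : (1 < k)%N ->
  (exists w : seq 'I_k, synchronizing delta w) ->
  Un_cv (fun lam => \big[Rplus/R0]_(m < k ^ lam | ~~ inS_lambda delta lam m)
                          csq m (k ^ lam)) R0.
Proof.
move=> k2 [w hw].
have kp : (0 < k)%N by apply: ltn_trans k2.
have kpe e : (0 < k ^ e)%N by rewrite expn_gt0 kp.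
have kpR e : 0 < INR (k ^ e) by apply: lt_0_INR; apply/ltP.
set n := (size w).+1.
set V := (k ^ size w + valw k (map val w))%N.
have hV : (V < k ^ n)%N.
  have [h1 _] := valw_pad k2 (s := map val w) (introT allP (fun d hd => match mapP hd with ex_intro2 x _ e => eq_ind_r (fun d => d < k)%N (ltn_ord x) e end)).
  rewrite size_map in h1.
  rewrite /V /n expnS; apply: (@leq_trans (k ^ size w * 2)).
    by rewrite muln2 -addnn ltn_add2l.
  by rewrite mulnC leq_mul2r k2 orbT.
set f := fun lam => INR (Bd k n V lam) / INR (k ^ lam).
have hf : Un_cv f 0.
  apply: abstract_cv.
  - move=> l; apply: div_bounds => //.
    by rewrite /Bd (leq_trans (count_size _ _)) // size_iota.
  - move=> l d; rewrite /f expnD mult_INR; apply: div_mono => //.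
    rewrite -mult_INR; apply: le_INR; apply/leP; exact: rec_A.
  - move=> eps heps.
    set P := INR (size (primes k)).
    have P0 : 0 <= P by apply: pos_INR.
    have hx2 : Rabs (/ 2) < 1 by rewrite Rabs_right; lra.
    have hy : 0 < eps / (2 * (P + 1)) by apply: Rdiv_lt_0_compat; lra.
    have [j hj] := pow_lt_1_zero _ hx2 _ hy.
    move: (hj j (le_n _)); rewrite Rabs_right; last by apply: Rle_ge; apply: pow_le; lra.
    move=> hj'.
    have h2j : INR (2 ^ j) = 2 ^ j by rewrite INR_expn.
    have h2jp : 0 < 2 ^ j by apply: pow_lt; lra.
    exists (j + n)%N, (P / INR (2 ^ j)), (1 - / INR (k ^ (j + n))), (j + n)%N.
    split; first by rewrite h2j; apply: Rmult_le_pos => //; apply: Rlt_le; apply: Rinv_0_lt_compat.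
    split.
      rewrite h2j /Rdiv -pow_inv.
      have : eps / (2 * (P + 1)) * (P + 1) = eps / 2 by field; lra.
      nra.
    split.
      have hC : 1 <= INR (k ^ (j + n)) by apply: (le_INR 1); apply/leP; exact: kpe.
      have := Rinv_0_lt_compat _ (kpR (j + n)%N).
      have : / INR (k ^ (j + n)) <= 1.
        rewrite -Rinv_1; apply: Rinv_le_contravar => //; lra.
      lra.
    move=> l hl.
    rewrite /f expnD mult_INR.
    apply: (@rec_real _ _ (INR (count (exc k j) (iota 0 (k ^ l))))).
    + exact: kpR.
    + by apply: (le_INR 1); apply/leP; exact: kpe.
    + by rewrite h2j.
    + rewrite -!mult_INR -!plus_INR; apply: le_INR; apply/leP.
      have hB := rec_B k2 (erefl (j + n)%N) hl hV.
      have hC := @count_le3 _ (bad k n V l) (fun x => bad k n V l x && ~~ exc k j x) (exc k j)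
                   (iota 0 (k ^ l)) ltac:(move=> x hx; apply/orP; case he: (exc k j x); [by right | by left; apply/andP; split; [exact: hx | idtac]]).
      rewrite -/(Bd k n V l) in hC.
      apply: (leq_trans (leq_add (leqnn _) hC)).
      rewrite addnA leq_add2r; exact: hB.
    + rewrite /P -!mult_INR; apply: le_INR; apply/leP.
      apply: ex_bound => //; apply: leq_trans hl; exact: leq_addr.
move=> eps heps; have [N hN] := hf eps heps; exists N => l hl.
move: (hN l hl); rewrite /R_dist !Rminus_0_r.
under eq_bigl => m do rewrite /inS_lambda ltn_ord andbT.
rewrite sum_csq //.
have hc : (count (fun x => ~~ inS delta (x ^ 2 %% k ^ l)) (iota 0 (k ^ l)) <= Bd k n V l)%N.
  apply: sub_count => x /=; apply: contra => hg.
  exact: (@good_inS k k2 n V Q delta w l x hw erefl erefl hg).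
have := div_bounds (leq_trans hc (leq_trans (count_size _ _) (eq_leq (size_iota _ _)))) (kpe l).
have hle : INR (count (fun x => ~~ inS delta (x ^ 2 %% k ^ l)) (iota 0 (k ^ l))) / INR (k ^ l) <= f l.
  apply: Rmult_le_compat_r; first by apply: Rlt_le; apply: Rinv_0_lt_compat.
  by apply: le_INR; apply/leP.
move=> h1; rewrite !Rabs_right; try lra.
Qed.

Close Scope R_scope.

Lemma mod_inj h1 h2 x t t' : coprime h1 h2 -> t < h2 -> t' < h2 ->
  (h1 * t + x) %% h2 = (h1 * t' + x) %% h2 -> t = t'.
Proof.
move=> hc ht ht' /eqP; rewrite eqn_modDr.
wlog le : t t' ht ht' / t' <= t.
  move=> W h; case: (leqP t' t) => [le|lt]; first exact: W.
  by apply/esym; apply: W => //; [exact: ltnW | rewrite eq_sym].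
rewrite eqn_mod_dvd ?leq_mul2l ?le ?orbT // -mulnBr Gauss_dvdr; last by rewrite coprime_sym.
move=> hd; apply/eqP; rewrite eqn_leq le andbT -subn_eq0.
apply/negP => hnz.
have hp : 0 < t - t' by rewrite lt0n; apply/negP.
have := dvdn_leq hp hd.
have : t - t' < h2 by apply: leq_ltn_trans (leq_subr _ _) ht.
by move=> a b; move: (leq_trans a b); rewrite ltnn.
Qed.

Lemma count_shift (Q : pred nat) h1 h2 x : coprime h1 h2 -> 0 < h2 ->
  (forall y, Q y = Q (y %% h2)) ->
  count (fun t => Q (h1 * t + x)) (iota 0 h2) = count Q (iota 0 h2).
Proof.
move=> hc h0 hQ.
set g := fun t => (h1 * t + x) %% h2.
have -> : count (fun t => Q (h1 * t + x)) (iota 0 h2) = count Q (map g (iota 0 h2)).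
  by rewrite count_map; apply: eq_count => t /=; rewrite /g -hQ.
apply/permP.
have U : uniq (map g (iota 0 h2)).
  rewrite map_inj_in_uniq ?iota_uniq // => t t'; rewrite !mem_iota /= ?add0n => ht ht'.
  exact: mod_inj.
have sub : {subset map g (iota 0 h2) <= iota 0 h2}.
  by move=> y /mapP [t _ ->]; rewrite mem_iota add0n /g ltn_pmod.
have sz : size (iota 0 h2) <= size (map g (iota 0 h2)) by rewrite size_map.
have [_ E] := uniq_min_size U sub sz.
by apply: uniq_perm => //; apply: iota_uniq.
Qed.


Lemma part2_nat h1 h2 m : 0 < h1 -> 0 < h2 -> coprime h1 h2 ->
  count (fun x => x ^ 2 == m %[mod h1 * h2]) (iota 0 (h1 * h2)) =
  count (fun x => x ^ 2 == m %[mod h1]) (iota 0 h1) *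
  count (fun x => x ^ 2 == m %[mod h2]) (iota 0 h2).
Proof.
move=> p1 p2 hc.
rewrite count_split count_sumE big_distrl /=; apply: eq_bigr => x _.
rewrite (eq_count (a2 := fun t => (x ^ 2 == m %[mod h1]) && ((h1 * t + x) ^ 2 == m %[mod h2]))); last first.
  by move=> t /=; rewrite chinese_remainder // mulnC modnMDXl.
case: (x ^ 2 == m %[mod h1]) => /=; last by rewrite mul0n; elim: (iota 0 h2).
rewrite mul1n (count_shift (Q := fun y => y ^ 2 == m %[mod h2])) //.
by move=> y; rewrite modnXm.
Qed.

Lemma part2 h1 h2 m : 0 < h1 -> 0 < h2 -> coprime h1 h2 ->
  csq m (h1 * h2) = Rmult (csq m h1) (csq m h2).
Proof.
move=> p1 p2 hc; rewrite /csq part2_nat // !mult_INR.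
have : INR h1 <> R0 by apply: not_0_INR => e; move: p1; rewrite e.
have : INR h2 <> R0 by apply: not_0_INR => e; move: p2; rewrite e.
move=> a b; field; split => //.
Qed.

Lemma count_period (P : pred nat) h s : 0 < h -> (forall y, P (y + h) = P y) ->
  count P (iota s h) = count P (iota 0 h).
Proof.
case: h => [//|h] _ hP; elim: s => [//|s IH].
rewrite -IH.
change (count P (iota s.+1 h.+1) = P s + count P (iota s.+1 h)).
rewrite -[h.+1]addn1 iotaD count_cat /= addn0 addnC; congr (_ + _).
by rewrite addSnnS hP.
Qed.

Lemma count_periodL (P : pred nat) h s q : 0 < h -> (forall y, P (y + h) = P y) ->
  count P (iota s (h * q)) = q * count P (iota 0 h).
Proof.
move=> h0 hP; rewrite count_blocks.
under eq_bigr => t _ do rewrite count_period //.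
by rewrite sum_nat_const card_ord.
Qed.

Open Scope R_scope.
Lemma nat_archi (x : R) : exists N : nat, (x < INR N).
Proof.
have [h1 _] := archimed x.
case: (Z_lt_le_dec (up x) 0) => hz.
  exists 0%N; have : (IZR (up x) < 0) by apply: IZR_lt. rewrite /=; lra.
exists (Z.to_nat (up x)); rewrite INR_IZR_INZ Z2Nat.id //; lra.
Qed.

Lemma cv_bound (cnt L C h q d r : R) : (0 < h) -> (0 < L) -> cnt = (q * C + d) ->
  L = (h * q + r) -> (0 <= d <= h) -> (0 <= r <= h) -> (0 <= C <= h) -> (0 <= q) ->
  (Rabs (cnt / L - C / h) <= h / L).
Proof.
move=> hh hL hc hl hd hr hC hq.
replace (cnt / L - C / h) with ((h * d - C * r) / (h * L)) by (rewrite hc hl; field; lra).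
replace (h / L) with ((h * h) / (h * L)) by (field; lra).
have hhL : (0 < h * L) by nra.
apply: Rabs_le; split; rewrite /Rdiv.
- rewrite Ropp_mult_distr_l; apply: Rmult_le_compat_r; first by apply: Rlt_le; apply: Rinv_0_lt_compat.
  nra.
- apply: Rmult_le_compat_r; first by apply: Rlt_le; apply: Rinv_0_lt_compat.
  nra.
Qed.

Lemma part1 h m : (0 < h)%N ->
  Un_cv (fun L => Rdiv (INR (count_sq m h L)) (INR L)) (csq m h).
Proof.
move=> h0 eps heps.
have hR : (0 < INR h) by apply: lt_0_INR; apply/ltP.
have [N hN] := nat_archi (INR h / eps).
exists N.+1 => L hL.
have hL' : (N.+1 <= L)%N by apply/leP.
have hL0 : (0 < INR L) by apply: lt_0_INR; apply/ltP; apply: leq_trans hL'.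
have hNL : (INR N <= INR L) by apply: le_INR; apply/leP; apply: ltnW.
set P := fun y => y ^ 2 == m %[mod h].
have hP : forall y, P (y + h)%N = P y.
  by move=> y; rewrite /P -modnXm modnDr modnXm.
set C := count P (iota 0 h).
have hLe : L = (h * (L %/ h) + L %% h)%N by rewrite mulnC -divn_eq.
have hcnt : count_sq m h L = (L %/ h * C + count P (iota (1 + h * (L %/ h)) (L %% h)))%N.
  by rewrite /count_sq -/P {1}hLe iotaD count_cat count_periodL.
rewrite /R_dist /csq -/P -/C.
apply: (Rle_lt_trans _ (INR h / INR L)).
  apply: (cv_bound (q := INR (L %/ h)) (d := INR (count P (iota (1 + h * (L %/ h)) (L %% h))))
                   (r := INR (L %% h))) => //.
  - by rewrite hcnt plus_INR mult_INR.
  - by rewrite {1}hLe plus_INR mult_INR.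
  - split; first exact: pos_INR.
    apply: le_INR; apply/leP; apply: leq_trans (count_size _ _) _.
    by rewrite size_iota ltnW // ltn_pmod.
  - split; first exact: pos_INR.
    by apply: le_INR; apply/leP; rewrite ltnW // ltn_pmod.
  - split; first exact: pos_INR.
    by apply: le_INR; apply/leP; apply: leq_trans (count_size _ _) _; rewrite size_iota.
  - exact: pos_INR.
apply: (Rmult_lt_reg_r (INR L / eps)).
  by apply: Rdiv_lt_0_compat.
replace (INR h / INR L * (INR L / eps)) with (INR h / eps) by (field; lra).
replace (eps * (INR L / eps)) with (INR L) by (field; lra).
lra.
Qed.

Close Scope R_scope.

Theorem proposition8p2 :
  (forall h m : nat, 0 < h -> m < h ->
     Un_cv (fun L => Rdiv (INR (count_sq m h L)) (INR L)) (csq m h))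
  /\
  (forall h1 h2 m : nat, 0 < h1 -> 0 < h2 -> coprime h1 h2 -> m < h1 * h2 ->
     csq m (h1 * h2) = Rmult (csq m h1) (csq m h2))
  /\
  (forall (k : nat) (Q : finType) (delta : Q -> 'I_k -> Q) (q0 : Q),
     2 <= k ->
     (exists w : seq 'I_k, synchronizing delta w) ->
     Un_cv (fun lam => \big[Rplus/R0]_(m < k ^ lam | ~~ inS_lambda delta lam m)
                          csq m (k ^ lam)) R0).
Proof.
split; first by move=> h m h0 _; exact: part1.
split; first by move=> h1 h2 m p1 p2 hc _; exact: part2.
by move=> k Q delta _ k2 hw; exact: part3.
Qed.
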